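(* Let $2\le m\le n$. If $u$ and $v$ are incomparable elements of the poset $(P_n\times P_2^m,\trianglelefteq)$, then $d_{H_{n,m}}(u,v)\le1+\binom{m}{2}$.
   Context: $P_k=\{0,\dots,k-1\}$, so $P_n\times P_2^m$ is the set of integer tuples $(v_0,\dots,v_m)$ with $0\le v_0\le n-1$ and $v_1,\dots,v_m\in\{0,1\}$. The dominance order $\trianglelefteq$ on $\mathbb{Z}^{m+1}$ is given by $(v_0,\dots,v_m)\trianglelefteq(u_0,\dots,u_m)$ iff $\sum_{j=0}^{i}v_j\le\sum_{j=0}^{i}u_j$ for every $0\le i\le m$; $P_n\times P_2^m$ carries the induced order. $H_{n,m}$ is the (undirected) Hasse diagram of $(P_n\times P_2^m,\trianglelefteq)$: $x,y$ are adjacent iff one covers the other. *)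

(* Defs.v *)
From mathcomp Require Import all_boot all_order.
Set Implicit Arguments. Unset Strict Implicit. Unset Printing Implicit Defensive.

(* Elements of P_n x P_2^m: a pair (v0, b) with v0 : 'I_n (0 <= v0 <= n-1)
   and b : {ffun 'I_m -> bool}, where v_(j+1) = b j (as 0/1). *)
Definition elt (n m : nat) := ('I_n * {ffun 'I_m -> bool})%type.

Definition psum (n m : nat) (x : elt n m) (i : 'I_m.+1) : nat :=
  x.1 + \sum_(j < m | j < i) nat_of_bool (x.2 j).

Definition dom (n m : nat) (x y : elt n m) : bool :=
  [forall i : 'I_m.+1, psum x i <= psum y i].

Definition covers (n m : nat) (x y : elt n m) : bool :=
  [&& dom x y, x != y &
      ~~ [exists z : elt n m, [&& z != x, z != y, dom x z & dom z y]]].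

Definition hadj (n m : nat) : rel (elt n m) :=
  fun x y => covers x y || covers y x.

Definition hdist_le (n m : nat) (u v : elt n m) (k : nat) : Prop :=
  exists p : seq (elt n m), [/\ path (@hadj n m) u p, last u p = v & size p <= k].

Definition incomparable (n m : nat) (u v : elt n m) : bool :=
  ~~ dom u v && ~~ dom v u.

(* Main.v *)
Require Import Defs.
From mathcomp Require Import all_boot all_order zify.
Set Implicit Arguments. Unset Strict Implicit. Unset Printing Implicit Defensive.

Section Gen.
Variables (T : finType) (le : rel T) (r : T -> nat).
Hypothesis le_tr : forall x y z, le x y -> le y z -> le x z.
Hypothesis le_rf : forall x, le x x.
Hypothesis r_mono : forall x y, le x y -> x != y -> r x < r y.
Definition gcov x z := [&& le x z, x != z & ~~ [exists z', [&& z' != x, z' != z, le x z' & le z' z]]].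

Lemma chain k : forall x y, le x y -> r y - r x <= k ->
  exists p, [/\ path gcov x p, last x p = y & size p <= r y - r x].
Proof.
elim: k => [|k IH] x y lxy hk.
  case: (eqVneq x y) => [->|nxy]; first by exists [::].
  have := r_mono lxy nxy; lia.
case: (eqVneq x y) => [->|nxy]; first by exists [::].
pose A : pred T := fun z => [&& z != x, le x z & le z y].
have Ay : A y by rewrite /A /= eq_sym nxy lxy le_rf.
case: (arg_minnP r Ay) => z /and3P [nzx lxz lzy] zmin.
have cz : gcov x z.
  rewrite /gcov lxz eq_sym nzx /=; apply/existsP => -[z' /and4P [h1 h2 h3 h4]].
  have : A z' by rewrite /A /= h1 h3 (le_tr h4 lzy).
  move/zmin; have := r_mono h4 h2; lia.
have rxz : r x < r z by apply: r_mono => //; rewrite eq_sym.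
have ryz : r z <= r y.
  case: (eqVneq z y) => [->//|nzy]; exact: ltnW (r_mono lzy nzy).
have [p [pp lp sp]] := IH z y lzy ltac:(lia).
exists (z :: p); split => //=; first by rewrite cz.
lia.
Qed.
End Gen.

Lemma path_rev (T : Type) (e : rel T) (esym : forall a b, e a b -> e b a) p :
  forall x, path e x p -> exists q, [/\ path e (last x p) q, last (last x p) q = x & size q = size p].
Proof.
elim: p => [|a p IH] x /=; first by exists [::].
case/andP => exa pa.
have [q [pq lq sq]] := IH a pa.
exists (rcons q x); split.
- by rewrite rcons_path pq lq esym.
- by rewrite last_rcons.
- by rewrite size_rcons sq.
Qed.

Section Conc.
Variables n m : nat.
Implicit Types x y : elt n m.

Definition P x (k : nat) : nat := x.1 + \sum_(j < m | j < k) nat_of_bool (x.2 j).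
Definition B x (k : nat) : nat := \sum_(j < m | val j == k) nat_of_bool (x.2 j).

Lemma P0 x : P x 0 = x.1.
Proof. by rewrite /P big_pred0 ?addn0. Qed.

Lemma Pstep x k : P x k.+1 = P x k + B x k.
Proof.
rewrite /P /B -addnA; congr (_ + _).
rewrite (bigID (fun j : 'I_m => j < k)) /=; congr (_ + _); apply: eq_bigl => j.
  by rewrite ltnS; case: (ltngtP j k).
rewrite ltnS -ltnNge.
by rewrite ltnS eqn_leq.
Qed.

Lemma B_lt x k (hk : k < m) : B x k = x.2 (Ordinal hk).
Proof.
rewrite /B (big_pred1 (Ordinal hk)) // => j /=.
Qed.

Lemma B_ge x k : m <= k -> B x k = 0.
Proof.
move=> hk; rewrite /B big_pred0 // => j; apply/negbTE.
by rewrite neq_ltn (leq_trans (ltn_ord j) hk).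
Qed.

Lemma B_le1 x k : B x k <= 1.
Proof. case: (ltnP k m) => hk; [rewrite B_lt; by case: (x.2 _) | by rewrite B_ge]. Qed.

Lemma P_lip x i j : i <= j -> P x i <= P x j <= P x i + (j - i).
Proof.
move=> hij; have -> : j = (j - i) + i by rewrite subnK.
rewrite addnK; elim: (j - i) => [|d IH]; first by rewrite add0n addn0 !leqnn.
rewrite addSn Pstep; have := B_le1 x (d + i); lia.
Qed.

Lemma P_const x k : m <= k -> P x k = P x m.
Proof.
move/subnK <-; elim: (k - m) => [|d IH] //.
by rewrite addSn Pstep IH B_ge ?addn0 // leq_addl.
Qed.

Lemma domP x y : dom x y -> forall k, P x k <= P y k.
Proof.
move/forallP=> h k; case: (leqP k m) => hk.
  by have := h (Ordinal (hk : k < m.+1)).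
rewrite !(P_const _ (ltnW hk)); exact: (h ord_max).
Qed.

Lemma Pinj x y : (forall k, k <= m -> P x k = P y k) -> x = y.
Proof.
move=> h; case: x y h => [x1 x2] [y1 y2] h.
have e1 : x1 = y1 by apply: val_inj; have := h 0 (leq0n _); rewrite !P0.
have e2 : x2 = y2.
  apply/ffunP => j.
  have := h j.+1 (ltn_ord j); have := h j (ltnW (ltn_ord j)).
  rewrite !Pstep !B_lt /= => ->.
  have -> : Ordinal (ltn_ord j) = j by apply: val_inj.
  by case: (x2 j); case: (y2 j) => // /eqP; rewrite eqn_add2l.
by rewrite e1 e2.
Qed.

Definition rank x := \sum_(i < m.+1) P x i.

Lemma rank_mono x y : dom x y -> x != y -> rank x < rank y.
Proof.
move=> d nxy.
have [i hi] : exists i : 'I_m.+1, P x i < P y i.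
  apply/existsP; apply: contraNT nxy; rewrite negb_exists => /forallP h.
  apply/eqP; apply: Pinj => k hk; apply/eqP; rewrite eqn_leq domP //=.
  by have := h (Ordinal (hk : k < m.+1)); rewrite ltnNge negbK.
rewrite /rank (bigD1 i) //= [X in _ < X](bigD1 i) //=.
rewrite -addSn leq_add //; apply: leq_sum => j _; exact: domP.
Qed.


End Conc.

Lemma bin2_2 m : 2 * 'C(m, 2) = m * (m - 1).
Proof.
elim: m => [|m IH] //; rewrite binS bin1 mulnDr IH; nia.
Qed.

Lemma sum_dist z k : 2 * \sum_(i < k) ((i - z) + (z - i)) =
  if k <= z then k * (2*z - k + 1) else z*(z+1) + (k-1-z)*(k-z).
Proof.
elim: k => [|k IH]; first by rewrite big_ord0.
rewrite big_ord_recr /= mulnDr IH.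
case: (leqP k.+1 z) => h1.
  rewrite (ltnW h1); nia.
case: (leqP k z) => h2.
  have -> : k = z by lia.
  nia.
nia.
Qed.

Lemma ivt (f g : nat -> nat) :
  (forall k, f k <= f k.+1 <= (f k).+1) -> (forall k, g k <= g k.+1 <= (g k).+1) ->
  forall d a, g a < f a -> f (a + d) < g (a + d) -> exists z, a < z < a + d /\ f z = g z.
Proof.
move=> hf hg; elim=> [|d IH] a h1 h2; first by rewrite addn0 in h2; lia.
have := hf a; have := hg a => ha hb.
case: (ltngtP (g a.+1) (f a.+1)) => h3.
- have [z [hz1 hz2]] := IH a.+1 h3 ltac:(by rewrite addSnnS).
  exists z; split => //; lia.
- lia.
- exists a.+1; split => //; case: d {IH} h2 => [|d] h2; last by lia.
  by rewrite addn1 h3 ltnn in h2.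
Qed.

Section Meet.
Variables (n m : nat) (u v : elt n m).

Definition w : elt n m :=
  (if u.1 <= v.1 then u.1 else v.1,
   [ffun j : 'I_m => minn (P u j.+1) (P v j.+1) != minn (P u j) (P v j)]).

Lemma Pw k : P w k = minn (P u k) (P v k).
Proof.
elim: k => [|k IH]; first by rewrite !P0 /w /=; case: leqP => h; lia.
rewrite !Pstep IH.
have := B_le1 u k; have := B_le1 v k.
case: (ltnP k m) => hk.
  rewrite (B_lt w hk) /w ffunE /= !Pstep.
  case: eqP => /= e; lia.
rewrite !B_ge //; lia.
Qed.

Lemma Pstep_le (x : elt n m) k : P x k <= P x k.+1 <= (P x k).+1.
Proof. rewrite Pstep; have := B_le1 x k; lia. Qed.

Lemma zero_cross a c : a < c -> c <= m -> P v a < P u a -> P u c < P v c ->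
  exists z, 0 < z < m /\ P u z = P v z.
Proof.
move=> ac cm h1 h2.
have := @ivt (P u) (P v) (Pstep_le u) (Pstep_le v) (c - a) a h1.
rewrite subnKC ?(ltnW ac) // => /(_ h2) [z [hz e]].
exists z; split => //; lia.
Qed.
End Meet.

Lemma dom_refl n m (x : elt n m) : dom x x.
Proof. by apply/forallP => i. Qed.

Lemma dom_tr n m (x y z : elt n m) : dom x y -> dom y z -> dom x z.
Proof.
move=> /forallP h1 /forallP h2; apply/forallP => i; exact: leq_trans (h1 i) (h2 i).
Qed.

Lemma up_path n m (x y : elt n m) : dom x y ->
  exists p, [/\ path (@hadj n m) x p, last x p = y & size p <= rank y - rank x].
Proof.
move=> dxy.
have [p [pp lp sp]] := @chain _ (@dom n m) (@rank n m) (@dom_tr n m) (@dom_refl n m)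
   (@rank_mono n m) _ x y dxy (leqnn _).
exists p; split => //; apply: sub_path pp => a b hab; apply/orP; left; exact: hab.
Qed.

Lemma neg_dom n m (x y : elt n m) : ~~ dom x y -> exists i, i <= m /\ P y i < P x i.
Proof.
move/forallPn => [i]; rewrite -ltnNge => h; exists i; split => //; exact: ltn_ord i.
Qed.

Lemma bound_aux z m : 0 < z < m -> z*(z+1) + (m.+1-1-z)*(m.+1-z) <= 2 + m*(m-1).
Proof.
case/andP; move: z m => z m z0 zm.
have [z' ez] : exists z', z = z'.+1 by exists z.-1; lia.
subst z.
have [t et] : exists t, m = z'.+2 + t by exists (m - z'.+2); lia.
subst m.
have -> : (z'.+2 + t).+1 - 1 - z'.+1 = t.+1 by lia.
have -> : (z'.+2 + t).+1 - z'.+1 = t.+2 by lia.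
have -> : (z'.+2 + t) - 1 = z'.+1 + t by lia.
have E : (z'.+2 + t) * (z'.+1 + t) + 2 = z'.+1 * z'.+2 + t.+1 * t.+2 + 2 * (z' * t) by nia.
rewrite addn1. lia.
Qed.

Theorem lemma5p6 (n m : nat) (u v : elt n m) :
  2 <= m -> m <= n -> incomparable u v -> hdist_le u v (1 + 'C(m, 2)).
Proof.
move=> m2 mn /andP [nuv nvu].
have [z [hz ez]] : exists z, 0 < z < m /\ P u z = P v z.
  have [a [am ha]] := neg_dom nuv; have [c [cm hc]] := neg_dom nvu.
  case: (ltngtP a c) => ac.
  - exact: zero_cross ac cm ha hc.
  - have [z [hz ez]] := zero_cross ac am hc ha; exists z; split => //.
  - by move: ha hc; rewrite ac; lia.
pose ww := w u v.
have dwu : dom ww u by apply/forallP => i; rewrite /psum -/(P _ _) Pw geq_minl.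
have dwv : dom ww v by apply/forallP => i; rewrite /psum -/(P _ _) Pw geq_minr.
have [p1 [pp1 lp1 sp1]] := up_path dwu.
have [p2 [pp2 lp2 sp2]] := up_path dwv.
have hsym : forall a b, @hadj n m a b -> hadj b a by move=> a b; rewrite /hadj orbC.
have [q [pq lq sq]] := path_rev hsym pp1.
rewrite lp1 in pq lq.
have key : rank u + rank v <= 2 * rank ww + \sum_(i < m.+1) ((i - z) + (z - i)).
  rewrite /rank -big_split big_distrr -big_split /=; apply: leq_sum => i _.
  rewrite Pw.
  case: (leqP i z) => iz.
    have := P_lip u iz; have := P_lip v iz; lia.
  have := P_lip u (ltnW iz); have := P_lip v (ltnW iz); lia.
have := sum_dist z m.+1; rewrite leqNgt ltnS (ltnW (proj2 (andP hz))) /= => sd.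
have hb := bin2_2 m.
set S := \sum_(i < m.+1) _ in key sd.
have hS : S <= 1 + 'C(m, 2).
  have := bound_aux hz; lia.
exists (q ++ p2); split.
- by rewrite cat_path pq lq.
- by rewrite last_cat lq.
- rewrite size_cat sq.
  have wu : rank ww <= rank u by apply: leq_sum => i _; rewrite Pw geq_minl.
  have wv : rank ww <= rank v by apply: leq_sum => i _; rewrite Pw geq_minr.
  lia.
Qed.
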